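(* For every $K\in\mathcal K(\mathcal H)^{ah}$ and $t\in\mathbb R$, $$\inf_{D\in\mathcal D(\mathcal B(\mathcal H))^{ah}}\|K+D\|=\inf_{\substack{d\in\mathcal D(\mathcal K(\mathcal H))^{ah}\\ \theta\in\mathbb R}}\|K+itI+d+i\theta I\|=\inf_{d\in\mathcal D(\mathcal K(\mathcal H))^{ah}}\|K+d\|.$$ Consequently the Finsler norm $\|Xb-bX\|_b$ for $X\in(\mathcal K+\mathbb C)^{ah}$ coincides with the quotient norm of the class of $X$ in each of $\mathcal K(\mathcal H)^{ah}/\mathcal D(\mathcal K(\mathcal H))^{ah}$ (after subtracting the scalar part), $(\mathcal K+\mathbb C)^{ah}/\mathcal D(\mathcal K+\mathbb C)^{ah}$, and $(\mathcal K(\mathcal H)^{ah}+\mathcal D(\mathcal B(\mathcal H))^{ah})/\mathcal D(\mathcal B(\mathcal H))^{ah}$.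
   Context: $\mathcal H$ is a separable infinite-dimensional Hilbert space with fixed orthonormal basis $\{e_i\}$; $\mathcal K(\mathcal H)$ compact operators; $ah$ = anti-Hermitian; $\mathcal D(\mathcal B(\mathcal H))$ bounded diagonal operators, $\mathcal D(\mathcal K(\mathcal H))=\mathcal D(\mathcal B(\mathcal H))\cap\mathcal K(\mathcal H)$; $\mathcal K+\mathbb C=\{K+\lambda I\}$, $\mathcal D(\mathcal K+\mathbb C)=\mathcal D(\mathcal K(\mathcal H))+\mathbb CI$. For $b$ a compact self-adjoint diagonal operator with pairwise distinct diagonal entries and $x=Xb-bX$ with $X\in(\mathcal K+\mathbb C)^{ah}$, $\|x\|_b=\inf\{\|Y\|:Y\in(\mathcal K+\mathbb C)^{ah},\ Yb-bY=x\}$. Quotient norms are the usual infimum norms. *)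

(* Defs.v *)
From Stdlib Require Import Reals.
Open Scope R_scope.

Definition Cplx : Type := (R * R)%type.
Definition Cre (z : Cplx) : R := fst z.
Definition Cim (z : Cplx) : R := snd z.
Definition C0 : Cplx := (0, 0).
Definition Ci : Cplx := (0, 1).
Definition Cadd (z w : Cplx) : Cplx := (fst z + fst w, snd z + snd w).
Definition Copp (z : Cplx) : Cplx := (- fst z, - snd z).
Definition Csub (z w : Cplx) : Cplx := Cadd z (Copp w).
Definition Cmul (z w : Cplx) : Cplx :=
  (fst z * fst w - snd z * snd w, fst z * snd w + snd z * fst w).
Definition Cconj (z : Cplx) : Cplx := (fst z, - snd z).
Definition Cmod (z : Cplx) : R := sqrt (fst z * fst z + snd z * snd z).
Definition Cofreal (r : R) : Cplx := (r, 0).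

Fixpoint Csum (n : nat) (f : nat -> Cplx) : Cplx :=
  match n with O => C0 | S k => Cadd (Csum k f) (f k) end.
Fixpoint Rsum (n : nat) (f : nat -> R) : R :=
  match n with O => 0 | S k => Rsum k f + f k end.

(* ---------- operators on H = l^2(N), via matrices w.r.t. {e_i} ----------
   An operator T is identified with its matrix  T i j = <T e_j, e_i>. *)
Definition Mat : Type := nat -> nat -> Cplx.

Definition madd (A B : Mat) : Mat := fun i j => Cadd (A i j) (B i j).
Definition msub (A B : Mat) : Mat := fun i j => Csub (A i j) (B i j).
Definition mscal (c : Cplx) : Mat := fun i j => if Nat.eqb i j then c else C0.

Definition form (N : nat) (A : Mat) (x y : nat -> Cplx) : Cplx :=
  Csum N (fun i => Csum N (fun j => Cmul (Cconj (x i)) (Cmul (A i j) (y j)))).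
Definition vnorm2 (N : nat) (x : nat -> Cplx) : R :=
  Rsum N (fun i => Cmod (x i) * Cmod (x i)).

Definition opbound (A : Mat) (M : R) : Prop :=
  forall (N : nat) (x y : nat -> Cplx),
    Cmod (form N A x y) <= M * sqrt (vnorm2 N x) * sqrt (vnorm2 N y).

Definition opbounded (A : Mat) : Prop := exists M, opbound A M.

Definition is_inf (S : R -> Prop) (m : R) : Prop :=
  (forall s, S s -> m <= s) /\ (forall l, (forall s, S s -> l <= s) -> l <= m).

Definition is_opnorm (A : Mat) (r : R) : Prop := is_inf (opbound A) r.

(* operators with finitely supported matrix (the union of the M_n(C)) *)
Definition finmat (F : Mat) : Prop :=
  exists n : nat, forall i j, (n <= i)%nat \/ (n <= j)%nat -> F i j = C0.

(* K(H): the norm closure of the finite matrices *)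
Definition opcompact (A : Mat) : Prop :=
  opbounded A /\
  forall eps, 0 < eps -> exists F, finmat F /\ opbound (msub A F) eps.

Definition antiherm (A : Mat) : Prop := forall i j, A i j = Copp (Cconj (A j i)).
Definition selfadj (A : Mat) : Prop := forall i j, A i j = Cconj (A j i).
Definition isdiag (A : Mat) : Prop := forall i j, i <> j -> A i j = C0.

Definition DB_ah (D : Mat) : Prop := opbounded D /\ isdiag D /\ antiherm D.
Definition DK_ah (d : Mat) : Prop := opcompact d /\ isdiag d /\ antiherm d.
Definition K_ah (K : Mat) : Prop := opcompact K /\ antiherm K.
Definition KC_ah (X : Mat) : Prop :=
  (exists K c, opcompact K /\ X = madd K (mscal c)) /\ antiherm X.
Definition DKC_ah (E : Mat) : Prop :=
  (exists d c, opcompact d /\ isdiag d /\ E = madd d (mscal c)) /\ antiherm E.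

(* commutator  X b - b X  for diagonal b (no infinite sums needed):
   (X b - b X) i j = X i j * (b j j - b i i) *)
Definition comm_diag (X b : Mat) : Mat :=
  fun i j => Cmul (X i j) (Csub (b j j) (b i i)).

(* Main.v *)
Require Import Defs.
From Stdlib Require Import Reals Lra Lia Psatz FunctionalExtensionality Classical.
Open Scope R_scope.

Lemma Ceq_intro (z w : Cplx) : fst z = fst w -> snd z = snd w -> z = w.
Proof. destruct z, w; simpl; intros; subst; reflexivity. Qed.

Ltac ceq := apply Ceq_intro; unfold Cadd, Csub, Copp, Cmul, Cconj, C0, Cofreal in *; simpl; ring.

Lemma Cmod_ge0 z : 0 <= Cmod z.
Proof. apply sqrt_pos. Qed.

Lemma Cmod_C0 : Cmod C0 = 0.
Proof. unfold Cmod, C0; simpl. replace (0*0+0*0) with 0 by ring. apply sqrt_0. Qed.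

Lemma Cmod_opp z : Cmod (Copp z) = Cmod z.
Proof. unfold Cmod, Copp; simpl; f_equal; ring. Qed.

Lemma Cmod_conj z : Cmod (Cconj z) = Cmod z.
Proof. unfold Cmod, Cconj; simpl; f_equal; ring. Qed.

Lemma Cmod_mul z w : Cmod (Cmul z w) = Cmod z * Cmod w.
Proof.
  unfold Cmod, Cmul; simpl. rewrite <- sqrt_mult by nra. f_equal; ring.
Qed.

Lemma Cmod_fst z : Rabs (fst z) <= Cmod z.
Proof.
  unfold Cmod. rewrite <- sqrt_Rsqr_abs. apply sqrt_le_1_alt. unfold Rsqr. nra.
Qed.

Lemma Cmod_triangle z w : Cmod (Cadd z w) <= Cmod z + Cmod w.
Proof.
  destruct z as [a b], w as [c d]; unfold Cmod, Cadd; simpl.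
  assert (Hu : 0 <= a*a+b*b) by nra. assert (Hv : 0 <= c*c+d*d) by nra.
  pose proof (sqrt_sqrt _ Hu) as Eu. pose proof (sqrt_sqrt _ Hv) as Ev.
  pose proof (sqrt_pos (a*a+b*b)). pose proof (sqrt_pos (c*c+d*d)).
  revert Eu Ev H H0.
  generalize (sqrt (a*a+b*b)) (sqrt (c*c+d*d)). intros su sv Eu Ev H H0.
  assert (Hl : (a*c+b*d)*(a*c+b*d) <= (su*sv)*(su*sv)).
  { replace ((su*sv)*(su*sv)) with ((su*su)*(sv*sv)) by ring. rewrite Eu, Ev.
    pose proof (Rle_0_sqr (a*d-b*c)). unfold Rsqr in *. nra. }
  assert (Hk : a*c+b*d <= su*sv).
  { destruct (Rle_dec (a*c+b*d) (su*sv)); auto. exfalso.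
    assert (0 <= su*sv) by nra. nra. }
  assert (H1 : (a+c)*(a+c)+(b+d)*(b+d) <= (su+sv)*(su+sv)).
  { replace ((su+sv)*(su+sv)) with (su*su + sv*sv + 2*(su*sv)) by ring.
    rewrite Eu, Ev. nra. }
  rewrite <- (sqrt_square (su+sv)) by lra. apply sqrt_le_1_alt; exact H1.
Qed.

Lemma Csum_ext_lt N f g : (forall i, (i < N)%nat -> f i = g i) -> Csum N f = Csum N g.
Proof. induction N; simpl; intros H; auto. rewrite IHN by (intros; apply H; lia). rewrite H by lia. auto. Qed.

Lemma Rsum_ext_lt N f g : (forall i, (i < N)%nat -> f i = g i) -> Rsum N f = Rsum N g.
Proof. induction N; simpl; intros H; auto. rewrite IHN by (intros; apply H; lia). rewrite H by lia. auto. Qed.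

Lemma Rsum_le N f g : (forall i, (i < N)%nat -> f i <= g i) -> Rsum N f <= Rsum N g.
Proof. induction N; simpl; intros H; [lra|]. pose proof (H N ltac:(lia)). assert (Rsum N f <= Rsum N g) by (apply IHN; intros; apply H; lia). lra. Qed.

Lemma Rsum_nonneg N f : (forall i, (i < N)%nat -> 0 <= f i) -> 0 <= Rsum N f.
Proof. intros H. replace 0 with (Rsum N (fun _ => 0)).
  - apply Rsum_le; auto.
  - clear H. induction N; simpl; auto. rewrite IHN. ring. Qed.

Lemma Rsum_scal N c f : Rsum N (fun i => c * f i) = c * Rsum N f.
Proof. induction N; simpl; [ring|]. rewrite IHN; ring. Qed.

Lemma Csum_add N f g : Csum N (fun i => Cadd (f i) (g i)) = Cadd (Csum N f) (Csum N g).
Proof. induction N; simpl. ceq. rewrite IHN. ceq. Qed.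

Lemma Csum_opp N f : Csum N (fun i => Copp (f i)) = Copp (Csum N f).
Proof. induction N; simpl. ceq. rewrite IHN. ceq. Qed.

Lemma Csum_zero N f : (forall i, (i < N)%nat -> f i = C0) -> Csum N f = C0.
Proof. induction N; simpl; intros H; auto. rewrite IHN by (intros; apply H; lia). rewrite H by lia. ceq. Qed.

Lemma Csum_single N f i : (i < N)%nat -> (forall k, (k < N)%nat -> k <> i -> f k = C0) -> Csum N f = f i.
Proof.
  induction N; intros Hi H; [lia|]. simpl.
  destruct (Nat.eq_dec i N).
  - subst. rewrite Csum_zero by (intros; apply H; lia). ceq.
  - rewrite IHN by (try lia; intros; apply H; lia). rewrite (H N) by lia. ceq.
Qed.

Lemma Rsum_0 N : Rsum N (fun _ => 0) = 0.
Proof. induction N; simpl; auto. rewrite IHN; ring. Qed.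

Lemma Rsum_single N f i : (i < N)%nat -> (forall k, (k < N)%nat -> k <> i -> f k = 0) -> Rsum N f = f i.
Proof.
  induction N; intros Hi H; [lia|]. simpl.
  destruct (Nat.eq_dec i N).
  - subst. replace (Rsum N f) with (Rsum N (fun _ => 0)).
    + rewrite Rsum_0. ring.
    + apply Rsum_ext_lt. intros; symmetry; apply H; lia.
  - rewrite IHN by (try lia; intros; apply H; lia). rewrite (H N) by lia. ring.
Qed.

Lemma Cmod_Csum N f : Cmod (Csum N f) <= Rsum N (fun i => Cmod (f i)).
Proof. induction N; simpl. rewrite Cmod_C0; lra.
  eapply Rle_trans; [apply Cmod_triangle|]. lra. Qed.

Lemma CS_aux N a b : (forall i, 0 <= a i) -> (forall i, 0 <= b i) ->
  0 <= Rsum N (fun i => a i * b i) /\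
  Rsum N (fun i => a i * b i) * Rsum N (fun i => a i * b i) <=
  Rsum N (fun i => a i * a i) * Rsum N (fun i => b i * b i).
Proof.
  intros Ha Hb. induction N; simpl. split; lra.
  destruct IHN as [H1 H2].
  assert (HA : 0 <= Rsum N (fun i => a i * a i)) by (apply Rsum_nonneg; intros; pose proof (Ha i); nra).
  assert (HB : 0 <= Rsum N (fun i => b i * b i)) by (apply Rsum_nonneg; intros; pose proof (Hb i); nra).
  revert H1 H2 HA HB.
  generalize (Rsum N (fun i => a i * b i)) (Rsum N (fun i => a i * a i)) (Rsum N (fun i => b i * b i)).
  intros S A B H1 H2 HA HB. pose proof (Ha N). pose proof (Hb N).
  set (x := a N) in *. set (y := b N) in *. clearbody x y.
  split. nra.
  assert (Hk : 2*S*x*y <= A*y*y + x*x*B).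
  { destruct (Rle_dec (2*S*x*y) (A*y*y + x*x*B)); auto. exfalso.
    assert (0 <= A*y*y + x*x*B) by nra.
    assert ((A*y*y + x*x*B)*(A*y*y + x*x*B) < (2*S*x*y)*(2*S*x*y)) by nra.
    pose proof (Rle_0_sqr (A*y*y - x*x*B)). unfold Rsqr in *.
    assert (0 <= x*x*y*y) by nra.
    assert (S*S*(x*x*y*y) <= A*B*(x*x*y*y)) by nra. nra. }
  nra.
Qed.

Lemma CS N a b : (forall i, 0 <= a i) -> (forall i, 0 <= b i) ->
  Rsum N (fun i => a i * b i) <= sqrt (Rsum N (fun i => a i * a i)) * sqrt (Rsum N (fun i => b i * b i)).
Proof.
  intros Ha Hb. destruct (CS_aux N a b Ha Hb) as [H1 H2].
  assert (HA : 0 <= Rsum N (fun i => a i * a i)) by (apply Rsum_nonneg; intros; pose proof (Ha i); nra).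
  assert (HB : 0 <= Rsum N (fun i => b i * b i)) by (apply Rsum_nonneg; intros; pose proof (Hb i); nra).
  rewrite <- sqrt_mult by auto. rewrite <- (sqrt_square (Rsum N (fun i => a i * b i))) at 1 by auto.
  apply sqrt_le_1_alt; auto.
Qed.

Definition mopp (A : Mat) : Mat := fun i j => Copp (A i j).
Definition compress (n : nat) (A : Mat) : Mat :=
  fun i j => if andb (Nat.ltb i n) (Nat.ltb j n) then A i j else C0.
Definition mzero : Mat := fun _ _ => C0.
Definition vproj (n : nat) (x : nat -> Cplx) : nat -> Cplx :=
  fun i => if Nat.ltb i n then x i else C0.

Lemma form_add N A B x y : form N (madd A B) x y = Cadd (form N A x y) (form N B x y).
Proof.
  unfold form. rewrite <- Csum_add. apply Csum_ext_lt; intros.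
  rewrite <- Csum_add. apply Csum_ext_lt; intros. unfold madd. ceq.
Qed.

Lemma form_opp N A x y : form N (mopp A) x y = Copp (form N A x y).
Proof.
  unfold form. rewrite <- Csum_opp. apply Csum_ext_lt; intros.
  rewrite <- Csum_opp. apply Csum_ext_lt; intros. unfold mopp. ceq.
Qed.

Lemma vnorm2_ge0 N x : 0 <= vnorm2 N x.
Proof. apply Rsum_nonneg; intros. pose proof (Cmod_ge0 (x i)). nra. Qed.

Lemma opbound_add A B a b : opbound A a -> opbound B b -> opbound (madd A B) (a + b).
Proof.
  intros HA HB N x y. rewrite form_add.
  eapply Rle_trans; [apply Cmod_triangle|]. specialize (HA N x y). specialize (HB N x y). lra.
Qed.

Lemma opbound_opp A a : opbound A a -> opbound (mopp A) a.
Proof. intros HA N x y. rewrite form_opp, Cmod_opp. auto. Qed.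

Lemma opbound_ext A B M : (forall i j, A i j = B i j) -> opbound A M -> opbound B M.
Proof.
  intros E H. replace B with A; auto.
  apply functional_extensionality; intro i; apply functional_extensionality; intro j; auto.
Qed.

Lemma is_opnorm_ext A B r : (forall i j, A i j = B i j) -> is_opnorm A r -> is_opnorm B r.
Proof.
  intros E H. replace B with A; auto.
  apply functional_extensionality; intro i; apply functional_extensionality; intro j; auto.
Qed.

Lemma opbound_sub A B a b : opbound A a -> opbound B b -> opbound (msub A B) (a + b).
Proof. intros HA HB. apply (opbound_add A (mopp B)); auto. apply opbound_opp; auto. Qed.

Lemma opbound_mono A M M' : opbound A M -> M <= M' -> opbound A M'.
Proof.
  intros H HM N x y. eapply Rle_trans; [apply H|].
  pose proof (sqrt_pos (vnorm2 N x)). pose proof (sqrt_pos (vnorm2 N y)).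
  apply Rmult_le_compat_r; auto. apply Rmult_le_compat_r; auto.
Qed.

Definition evec (i : nat) : nat -> Cplx := fun k => if Nat.eqb k i then (1, 0) else C0.

Lemma vnorm2_evec i : vnorm2 (S i) (evec i) = 1.
Proof.
  unfold vnorm2. rewrite (Rsum_single _ _ i) by (try lia; intros k Hk Hki; unfold evec;
    rewrite (proj2 (Nat.eqb_neq k i) Hki), Cmod_C0; ring).
  unfold evec. rewrite Nat.eqb_refl. unfold Cmod; simpl.
  replace (1*1+0*0) with 1 by ring. rewrite sqrt_1. ring.
Qed.

Lemma opbound_entry A M i : opbound A M -> Cmod (A i i) <= M.
Proof.
  intros H. specialize (H (S i) (evec i) (evec i)). rewrite vnorm2_evec, sqrt_1 in H.
  unfold form in H.
  rewrite (Csum_single _ _ i) in H.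
  2: lia.
  2: { intros k Hk Hki. apply Csum_zero. intros. unfold evec.
       rewrite (proj2 (Nat.eqb_neq k i) Hki). ceq. }
  rewrite (Csum_single _ _ i) in H.
  2: lia.
  2: { intros k Hk Hki. unfold evec.
       rewrite (proj2 (Nat.eqb_neq k i) Hki). ceq. }
  replace (Cmul (Cconj (evec i i)) (Cmul (A i i) (evec i i))) with (A i i) in H.
  - lra.
  - unfold evec. rewrite Nat.eqb_refl. ceq.
Qed.

Lemma opbound_nonneg A M : opbound A M -> 0 <= M.
Proof. intros H. pose proof (opbound_entry A M 0 H). pose proof (Cmod_ge0 (A 0%nat 0%nat)). lra. Qed.

Lemma form_zero N A x y : (forall i j, A i j = C0) -> form N A x y = C0.
Proof.
  intros H. unfold form. apply Csum_zero; intros. apply Csum_zero; intros. rewrite H. ceq.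
Qed.

Lemma opbound_zero A e : (forall i j, A i j = C0) -> 0 <= e -> opbound A e.
Proof.
  intros H He N x y. rewrite form_zero, Cmod_C0 by auto.
  pose proof (sqrt_pos (vnorm2 N x)). pose proof (sqrt_pos (vnorm2 N y)).
  apply Rmult_le_pos; auto. apply Rmult_le_pos; auto.
Qed.

Lemma vnorm2_proj N n x : vnorm2 N (vproj n x) <= vnorm2 N x.
Proof.
  unfold vnorm2. apply Rsum_le. intros i _. unfold vproj. destruct (Nat.ltb i n).
  - lra.
  - rewrite Cmod_C0. pose proof (Cmod_ge0 (x i)). nra.
Qed.

Lemma opbound_compress A M n : opbound A M -> opbound (compress n A) M.
Proof.
  intros H N x y.
  replace (form N (compress n A) x y) with (form N A (vproj n x) (vproj n y)).
  - eapply Rle_trans; [apply H|].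
    pose proof (opbound_nonneg A M H).
    pose proof (sqrt_le_1_alt _ _ (vnorm2_proj N n x)).
    pose proof (sqrt_le_1_alt _ _ (vnorm2_proj N n y)).
    pose proof (sqrt_pos (vnorm2 N (vproj n x))). pose proof (sqrt_pos (vnorm2 N (vproj n y))).
    apply Rmult_le_compat; try apply Rmult_le_pos; auto.
    apply Rmult_le_compat_l; auto.
  - unfold form. apply Csum_ext_lt; intros. apply Csum_ext_lt; intros.
    unfold compress, vproj. destruct (Nat.ltb i n), (Nat.ltb i0 n); simpl; ceq.
Qed.

Lemma opbound_scal c : opbound (mscal c) (Cmod c).
Proof.
  intros N x y. unfold form.
  eapply Rle_trans; [apply Cmod_Csum|].
  eapply Rle_trans.
  { apply Rsum_le. intros i Hi. apply Cmod_Csum. }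
  cbv beta.
  replace (Rsum N (fun i => Rsum N (fun j => Cmod (Cmul (Cconj (x i)) (Cmul (mscal c i j) (y j))))))
    with (Rsum N (fun i => Cmod c * (Cmod (x i) * Cmod (y i)))).
  - rewrite (Rsum_scal N (Cmod c) (fun i => Cmod (x i) * Cmod (y i))). rewrite Rmult_assoc. apply Rmult_le_compat_l; [apply Cmod_ge0|].
    apply (CS N (fun i => Cmod (x i)) (fun i => Cmod (y i))); intros; apply Cmod_ge0.
  - apply Rsum_ext_lt; intros i Hi. rewrite (Rsum_single _ _ i Hi).
    + unfold mscal. rewrite Nat.eqb_refl. rewrite !Cmod_mul, Cmod_conj. ring.
    + intros k Hk Hki. unfold mscal.
      rewrite (proj2 (Nat.eqb_neq i k)) by auto. rewrite !Cmod_mul, Cmod_C0. ring.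
Qed.

Lemma inf_exists (S : R -> Prop) : (exists s, S s) -> (forall s, S s -> 0 <= s) -> exists m, is_inf S m.
Proof.
  intros [s0 Hs0] Hpos.
  destruct (completeness (fun x => S (- x))) as [m [Hub Hlub]].
  - exists 0. intros x Hx. pose proof (Hpos _ Hx). lra.
  - exists (- s0). rewrite Ropp_involutive. auto.
  - exists (- m). split.
    + intros s Hs. assert (- s <= m) by (apply Hub; rewrite Ropp_involutive; auto). lra.
    + intros l Hl. assert (m <= - l).
      { apply Hlub. intros x Hx. pose proof (Hl _ Hx). lra. }
      lra.
Qed.

Lemma opnorm_bounded A r : is_opnorm A r -> opbounded A.
Proof.
  intros [H1 H2]. destruct (classic (opbounded A)) as [?|Hn]; auto. exfalso.
  assert (r + 1 <= r); [|lra]. apply H2. intros s Hs. exfalso. apply Hn. exists s; auto.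
Qed.

Lemma opnorm_le A r M : is_opnorm A r -> opbound A M -> r <= M.
Proof. intros [H1 _] H. apply H1; auto. Qed.

Lemma opnorm_bound A r e : is_opnorm A r -> 0 < e -> opbound A (r + e).
Proof.
  intros [H1 H2] He. destruct (classic (opbound A (r + e))) as [?|Hn]; auto. exfalso.
  assert (r + e <= r); [|lra]. apply H2. intros s Hs.
  destruct (Rle_dec (r + e) s); auto. exfalso. apply Hn. apply (opbound_mono _ s); auto; lra.
Qed.

Lemma opnorm_exists A : opbounded A -> exists r, is_opnorm A r.
Proof.
  intros Hb. apply inf_exists; auto. intros s Hs. eapply opbound_nonneg; eauto.
Qed.

Lemma opnorm_nonneg A r : is_opnorm A r -> 0 <= r.
Proof.
  intros [H1 H2]. apply H2. intros s Hs. eapply opbound_nonneg; eauto.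
Qed.

Lemma antiherm_madd A B : antiherm A -> antiherm B -> antiherm (madd A B).
Proof. intros HA HB i j. unfold madd. rewrite (HA i j), (HB i j). ceq. Qed.

Lemma antiherm_msub A B : antiherm A -> antiherm B -> antiherm (msub A B).
Proof. intros HA HB i j. unfold msub. rewrite (HA i j), (HB i j). ceq. Qed.

Lemma mscal_off c i j : i <> j -> mscal c i j = C0.
Proof. intros H. unfold mscal. rewrite (proj2 (Nat.eqb_neq i j) H). auto. Qed.

Lemma antiherm_mscal c : fst c = 0 -> antiherm (mscal c).
Proof.
  intros H i j. destruct (Nat.eq_dec i j).
  - subst. unfold mscal. rewrite Nat.eqb_refl. destruct c; simpl in *; subst. ceq.
  - rewrite !mscal_off by auto. ceq.
Qed.

Lemma isdiag_madd A B : isdiag A -> isdiag B -> isdiag (madd A B).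
Proof. intros HA HB i j H. unfold madd. rewrite HA, HB by auto. ceq. Qed.

Lemma isdiag_mscal c : isdiag (mscal c).
Proof. intros i j H. apply mscal_off; auto. Qed.

Lemma opcompact_bounded A : opcompact A -> opbounded A.
Proof. intros [H _]; auto. Qed.

Lemma opbounded_add A B : opbounded A -> opbounded B -> opbounded (madd A B).
Proof. intros [a Ha] [b Hb]. exists (a + b). apply opbound_add; auto. Qed.

Lemma opbounded_sub A B : opbounded A -> opbounded B -> opbounded (msub A B).
Proof. intros [a Ha] [b Hb]. exists (a + b). apply opbound_sub; auto. Qed.

Lemma finmat_compact F : opbounded F -> finmat F -> opcompact F.
Proof.
  intros Hb Hf. split; auto. intros eps He. exists F. split; auto.
  apply opbound_zero; [|lra]. intros; unfold msub; ceq.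
Qed.

Lemma opcompact_add A B : opcompact A -> opcompact B -> opcompact (madd A B).
Proof.
  intros [HA1 HA2] [HB1 HB2]. split. apply opbounded_add; auto.
  intros eps He. destruct (HA2 (eps/2)) as [F1 [[n1 Hn1] H1]]; [lra|].
  destruct (HB2 (eps/2)) as [F2 [[n2 Hn2] H2]]; [lra|].
  exists (madd F1 F2). split.
  - exists (Nat.max n1 n2). intros i j Hij. unfold madd.
    rewrite Hn1, Hn2 by lia. ceq.
  - replace eps with (eps/2 + eps/2) by field.
    apply (opbound_ext (madd (msub A F1) (msub B F2))).
    + intros; unfold madd, msub; ceq.
    + apply opbound_add; auto.
Qed.

Lemma opbound_subswap A B e : opbound (msub A B) e -> opbound (msub B A) e.
Proof.
  intros H. apply (opbound_ext (mopp (msub A B))). intros; unfold mopp, msub; ceq.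
  apply opbound_opp; auto.
Qed.

Lemma DK_DB d : DK_ah d -> DB_ah d.
Proof. intros [H1 [H2 H3]]. repeat split; auto. apply opcompact_bounded; auto. Qed.

Lemma compress_DK n D : DB_ah D -> DK_ah (compress n D).
Proof.
  intros [[M HM] [Hd Ha]]. split; [|split].
  - apply finmat_compact.
    + exists M. apply opbound_compress; auto.
    + exists n. intros i j Hij. unfold compress.
      destruct Hij as [Hij|Hij];
        [rewrite (proj2 (Nat.ltb_ge i n) Hij) | rewrite (proj2 (Nat.ltb_ge j n) Hij), Bool.andb_false_r];
        reflexivity.
  - intros i j Hij. unfold compress. rewrite Hd by auto. destruct (andb _ _); auto.
  - intros i j. unfold compress. rewrite Bool.andb_comm.
    destruct (andb _ _). apply Ha. ceq.
Qed.

Lemma approx K D r eps : opcompact K -> DB_ah D -> is_opnorm (madd K D) r -> 0 < eps ->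
  exists d r', DK_ah d /\ is_opnorm (madd K d) r' /\ r' <= r + eps.
Proof.
  intros [Kb Kc] HD Hr He.
  destruct (Kc (eps/4)) as [F [[n Hn] HF]]; [lra|].
  exists (compress n D).
  assert (Hb : opbound (madd K (compress n D)) (eps/4 + (eps/4 + (r + eps/4)))).
  { apply (opbound_ext (madd (msub K F) (compress n (madd (msub F K) (madd K D))))).
    - intros i j. unfold madd, msub, compress.
      destruct (Nat.ltb i n) eqn:Ei, (Nat.ltb j n) eqn:Ej; simpl; try ceq.
      + rewrite Hn by (right; apply Nat.ltb_ge; auto). ceq.
      + rewrite Hn by (left; apply Nat.ltb_ge; auto). ceq.
      + rewrite Hn by (left; apply Nat.ltb_ge; auto). ceq.
    - apply opbound_add; auto. apply opbound_compress. apply opbound_add.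
      + apply opbound_subswap; auto.
      + apply opnorm_bound; auto; lra. }
  destruct (opnorm_exists _ (ex_intro _ _ Hb)) as [r' Hr'].
  exists r'. split; [apply compress_DK; auto|]. split; auto.
  pose proof (opnorm_le _ _ _ Hr' Hb). lra.
Qed.

Definition Bset (K : Mat) : R -> Prop := fun r => exists d, DK_ah d /\ is_opnorm (madd K d) r.

Lemma mzero_DK : DK_ah mzero.
Proof.
  split; [|split].
  - apply finmat_compact. exists 0. apply opbound_zero; [auto|lra].
    exists 0%nat. intros; auto.
  - intros i j _; auto.
  - intros i j; unfold mzero; ceq.
Qed.

Lemma Bset_inf K : opcompact K -> exists m, is_inf (Bset K) m.
Proof.
  intros HK. apply inf_exists.
  - destruct (opnorm_exists (madd K mzero)) as [r Hr].
    + apply opbounded_add. apply opcompact_bounded; auto. destruct mzero_DK as [H _].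
      apply opcompact_bounded; auto.
    + exists r, mzero. split; auto. apply mzero_DK.
  - intros s [d [_ H]]. eapply opnorm_nonneg; eauto.
Qed.

Lemma squeeze K m (S : R -> Prop) : opcompact K -> is_inf (Bset K) m ->
  (forall s, S s -> exists D, DB_ah D /\ is_opnorm (madd K D) s) ->
  (forall r, Bset K r -> exists s, S s /\ s <= r) -> is_inf S m.
Proof.
  intros HK [Hm1 Hm2] H1 H2. split.
  - intros s Hs. destruct (H1 s Hs) as [D [HD Hn]].
    destruct (Rle_dec m s) as [?|Hlt]; auto. exfalso.
    destruct (approx K D s ((m - s)/2) HK HD Hn) as [d [r' [Hd [Hr' Hle]]]]; [lra|].
    assert (m <= r') by (apply Hm1; exists d; auto). lra.
  - intros l Hl. apply Hm2. intros r Hr. destruct (H2 r Hr) as [s [Hs Hsr]].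
    pose proof (Hl s Hs). lra.
Qed.

Lemma lam_imag K0 lam : opcompact K0 -> antiherm (madd K0 (mscal lam)) -> fst lam = 0.
Proof.
  intros [_ Kc] Ha.
  assert (Hall : forall eps, 0 < eps -> Rabs (fst lam) <= eps).
  { intros eps He. destruct (Kc eps He) as [F [[n Hn] HF]].
    pose proof (opbound_entry _ _ n HF) as H.
    pose proof (Cmod_fst (msub K0 F n n)) as H2.
    specialize (Ha n n). unfold madd, mscal in Ha. rewrite Nat.eqb_refl in Ha.
    assert (E : fst (madd K0 (mscal lam) n n) = 0).
    { unfold madd, mscal. rewrite Nat.eqb_refl.
      apply (f_equal fst) in Ha. unfold Cadd, Copp, Cconj in Ha. simpl in *. lra. }
    unfold madd, mscal in E. rewrite Nat.eqb_refl in E.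
    assert (E2 : fst (msub K0 F n n) = - fst lam).
    { unfold msub. rewrite (Hn n n) by lia.
      unfold Csub, Cadd, Copp, C0 in *; simpl in *. lra. }
    rewrite E2, Rabs_Ropp in H2. lra. }
  destruct (Req_dec (fst lam) 0) as [?|Hne]; auto.
  pose proof (Rabs_pos_lt _ Hne). specialize (Hall (Rabs (fst lam) / 2) ltac:(lra)). lra.
Qed.

Lemma K0_antiherm K0 lam : opcompact K0 -> antiherm (madd K0 (mscal lam)) -> antiherm K0.
Proof.
  intros Hc Ha. pose proof (lam_imag _ _ Hc Ha) as Hl.
  intros i j. specialize (Ha i j). unfold madd in Ha. destruct (Nat.eq_dec i j).
  - subst. unfold mscal in Ha. rewrite Nat.eqb_refl in Ha.
    destruct lam as [l1 l2]; simpl in Hl; subst.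
    apply Ceq_intro.
    + apply (f_equal fst) in Ha. unfold Cadd, Copp, Cconj in *; simpl in *. lra.
    + apply (f_equal snd) in Ha. unfold Cadd, Copp, Cconj in *; simpl in *. lra.
  - rewrite !mscal_off in Ha by auto.
    apply Ceq_intro.
    + apply (f_equal fst) in Ha. unfold Cadd, Copp, Cconj, C0 in *; simpl in *. lra.
    + apply (f_equal snd) in Ha. unfold Cadd, Copp, Cconj, C0 in *; simpl in *. lra.
Qed.

Lemma Cmul_cancel u w v : Cmul u v = Cmul w v -> v <> C0 -> u = w.
Proof.
  intros H Hv. destruct u as [a b], w as [c d], v as [e f].
  unfold Cmul in H; simpl in H. injection H; intros H2 H1.
  assert (Hp : e*e + f*f <> 0).
  { intros Hz. apply Hv. unfold C0. assert (e = 0) by nra. assert (f = 0) by nra. subst; auto. }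
  assert (Z1 : (a*e-b*f)-(c*e-d*f) = 0) by lra.
  assert (Z2 : (a*f+b*e)-(c*f+d*e) = 0) by lra.
  assert (E1 : (a - c) * (e*e+f*f) = 0).
  { transitivity (e*((a*e-b*f)-(c*e-d*f)) + f*((a*f+b*e)-(c*f+d*e))); [ring|].
    rewrite Z1, Z2; ring. }
  assert (E2 : (b - d) * (e*e+f*f) = 0).
  { transitivity (e*((a*f+b*e)-(c*f+d*e)) - f*((a*e-b*f)-(c*e-d*f))); [ring|].
    rewrite Z1, Z2; ring. }
  apply Rmult_integral in E1. apply Rmult_integral in E2.
  destruct E1; [|contradiction]. destruct E2; [|contradiction].
  f_equal; lra.
Qed.

Lemma H1gen K0 Z s : opcompact K0 -> antiherm K0 -> antiherm Z ->
  (forall i j, i <> j -> Z i j = K0 i j) -> is_opnorm Z s ->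
  exists D, DB_ah D /\ is_opnorm (madd K0 D) s.
Proof.
  intros Kc Ka Za Zd Hn. exists (msub Z K0). split; [split; [|split]|].
  - apply opbounded_sub. eapply opnorm_bounded; eauto. apply opcompact_bounded; auto.
  - intros i j Hij. unfold msub. rewrite Zd by auto. ceq.
  - apply antiherm_msub; auto.
  - apply (is_opnorm_ext Z); auto. intros; unfold madd, msub; ceq.
Qed.

Theorem mainTheorem11 :
  (* Part 1: the three infima coincide *)
  (forall (K : Mat) (t : R), K_ah K ->
     exists m : R,
       is_inf (fun r => exists D, DB_ah D /\ is_opnorm (madd K D) r) m /\
       is_inf (fun r => exists d theta, DK_ah d /\
                  is_opnorm (madd (madd (madd K (mscal (0, t))) d) (mscal (0, theta))) r) m /\
       is_inf (fun r => exists d, DK_ah d /\ is_opnorm (madd K d) r) m)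
  /\
  (* Part 2: the Finsler norm equals the three quotient norms *)
  (forall (b : Mat) (K0 : Mat) (lam : Cplx),
     opcompact b -> selfadj b -> isdiag b ->
     (forall i j, i <> j -> b i i <> b j j) ->
     opcompact K0 ->
     KC_ah (madd K0 (mscal lam)) ->
     let X := madd K0 (mscal lam) in
     exists m : R,
       (* ||X b - b X||_b *)
       is_inf (fun r => exists Y, KC_ah Y /\ comm_diag Y b = comm_diag X b /\
                                  is_opnorm Y r) m /\
       (* quotient norm in K(H)^ah / D(K(H))^ah of X - lam I *)
       is_inf (fun r => exists d, DK_ah d /\ is_opnorm (madd K0 d) r) m /\
       (* quotient norm in (K+C)^ah / D(K+C)^ah *)
       is_inf (fun r => exists E, DKC_ah E /\ is_opnorm (madd X E) r) m /\
       (* quotient norm in (K(H)^ah + D(B(H))^ah) / D(B(H))^ah *)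
       is_inf (fun r => exists D, DB_ah D /\ is_opnorm (madd X D) r) m).
Proof.
  split.
  - intros K t [Kc Ka]. destruct (Bset_inf K Kc) as [m Hm]. exists m. split; [|split].
    + apply (squeeze K m); [exact Kc | exact Hm | | ].
      * intros s [D [HD Hn]]. exists D; auto.
      * intros r [d [Hd Hn]]. exists r; split; [|lra]. exists d. split; auto. apply DK_DB; auto.
    + apply (squeeze K m); [exact Kc | exact Hm | | ].
      * intros s [d [th [Hd Hn]]]. destruct Hd as [dc [dd da]].
        apply (H1gen K (madd (madd (madd K (mscal (0, t))) d) (mscal (0, th))) s); auto.
        -- apply antiherm_madd; [apply antiherm_madd; [apply antiherm_madd|]|]; auto; apply antiherm_mscal; reflexivity.
        -- intros i j Hij. unfold madd. rewrite !mscal_off by auto. rewrite dd by auto. ceq.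
      * intros r [d [Hd Hn]]. exists r; split; [|lra]. exists d, (-t). split; auto.
        apply (is_opnorm_ext (madd K d)); auto. intros i j. unfold madd, mscal.
        destruct (Nat.eqb i j); ceq.
    + exact Hm.
  - intros b K0 lam bc bsa bdiag bdist K0c XKC X. subst X.
    pose proof (proj2 XKC) as Xa.
    pose proof (K0_antiherm _ _ K0c Xa) as K0a.
    pose proof (lam_imag _ _ K0c Xa) as Hl.
    assert (Hma : antiherm (mscal (Copp lam))) by (apply antiherm_mscal; simpl; rewrite Hl; ring).
    destruct (Bset_inf K0 K0c) as [m Hm]. exists m. split; [|split; [|split]].
    + apply (squeeze K0 m); [exact K0c | exact Hm | | ].
      * intros s [Y [[_ Ya] [Hc Hn]]]. apply (H1gen K0 Y s); auto.
        intros i j Hij.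
        pose proof (f_equal (fun f => f i j) Hc) as Hij'. unfold comm_diag in Hij'. simpl in Hij'.
        apply Cmul_cancel in Hij'.
        -- rewrite Hij'. unfold madd. rewrite mscal_off by auto. ceq.
        -- intros Hz. apply (bdist i j Hij). unfold Csub, Cadd, Copp, C0 in Hz.
           injection Hz; intros. apply Ceq_intro; lra.
      * intros r [d [[dc [dd da]] Hn]]. exists r. split; [|lra]. exists (madd K0 d).
        split; [|split].
        -- split.
           ++ exists (madd K0 d), C0. split. apply opcompact_add; auto.
              apply functional_extensionality; intro i; apply functional_extensionality; intro j.
              unfold madd, mscal; destruct (Nat.eqb i j); ceq.
           ++ apply antiherm_madd; auto.
        -- apply functional_extensionality; intro i; apply functional_extensionality; intro j.
           unfold comm_diag, madd. destruct (Nat.eq_dec i j).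
           ++ subst. ceq.
           ++ rewrite dd, mscal_off by auto. ceq.
        -- exact Hn.
    + exact Hm.
    + apply (squeeze K0 m); [exact K0c | exact Hm | | ].
      * intros s [E [[[d [c [dc [dd HE]]]] Ea] Hn]]. apply (H1gen K0 (madd (madd K0 (mscal lam)) E) s); auto.
        -- apply antiherm_madd; auto.
        -- intros i j Hij. subst E. unfold madd. rewrite !mscal_off by auto. rewrite dd by auto. ceq.
      * intros r [d [[dc [dd da]] Hn]]. exists r; split; [|lra].
        exists (madd d (mscal (Copp lam))). split.
        -- split. exists d, (Copp lam). auto. apply antiherm_madd; auto.
        -- apply (is_opnorm_ext (madd K0 d)); auto. intros i j; unfold madd, mscal.
           destruct (Nat.eqb i j); ceq.
    + apply (squeeze K0 m); [exact K0c | exact Hm | | ].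
      * intros s [D [[Db [Dd Da]] Hn]]. apply (H1gen K0 (madd (madd K0 (mscal lam)) D) s); auto.
        -- apply antiherm_madd; auto.
        -- intros i j Hij. unfold madd. rewrite !mscal_off by auto. rewrite Dd by auto. ceq.
      * intros r [d [[dc [dd da]] Hn]]. exists r; split; [|lra].
        exists (madd d (mscal (Copp lam))). split.
        -- split; [|split].
           ++ apply opbounded_add. apply opcompact_bounded; auto. exists (Cmod (Copp lam)). apply opbound_scal.
           ++ apply isdiag_madd; auto. apply isdiag_mscal.
           ++ apply antiherm_madd; auto.
        -- apply (is_opnorm_ext (madd K0 d)); auto. intros i j; unfold madd, mscal.
           destruct (Nat.eqb i j); ceq.
Qed.
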